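(* Let $I$ be the ideal of $\mathrm{WCQSym}$ generated by $B_\varepsilon=\{M_\gamma:\gamma\in\mathcal C_\varepsilon\}$. For every $\tilde{\mathbb N}$-composition $\alpha\in\mathcal C_N$, $$M_\alpha+(-1)^{\ell_\varepsilon(\alpha)+1}M_{\bar\alpha}\in I.$$
   Context: $\tilde{\mathbb N}=\mathbb N\cup\{\varepsilon\}$ with $0+\varepsilon=\varepsilon+\varepsilon=\varepsilon$ and $n+\varepsilon=n$ for integers $n\ge1$. $\mathbf{k}$ is a commutative ring containing $\mathbb Q$; $\mathbf{k}[[X]]_{\tilde{\mathbb N}}$, $X=\{x_1<x_2<\cdots\}$, is the algebra of possibly infinite linear combinations of formal monomials $\prod x_i^{f(x_i)}$ with $f$ finitely supported $\tilde{\mathbb N}$-valued, multiplied by adding exponents in $\tilde{\mathbb N}$. An $\tilde{\mathbb N}$-composition is a finite (possibly empty) sequence of elements of $\{\varepsilon,1,2,\dots\}$; $M_{(\gamma_1,\dots,\gamma_k)}=\sum_{1\le i_1<\cdots<i_k}x_{i_1}^{\gamma_1}\cdots x_{i_k}^{\gamma_k}$, $M_\emptyset=1$, and $\mathrm{WCQSym}$ is their $\mathbf k$-span, a subalgebra of $\mathbf{k}[[X]]_{\tilde{\mathbb N}}$. $\ell_\varepsilon(\alpha)$ is the number of entries of $\alpha$ equal to $\varepsilon$ and $\bar\alpha$ is $\alpha$ with its $\varepsilon$ entries deleted. $\mathcal C_\varepsilon$ is the set of $\tilde{\mathbb N}$-compositions with first entry $\varepsilon$, and $\mathcal C_N$ the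 set of all others (the empty composition and those whose first entry is a positive integer). *)

(* Defs.v *)
From mathcomp Require Import all_boot all_order all_algebra.
Set Implicit Arguments. Unset Strict Implicit. Unset Printing Implicit Defensive.
Import GRing.Theory.
Local Open Scope ring_scope.

(* Elements of Ñ = N ∪ {ε}:  None = ε,  Some n = n. *)
Definition wn := option nat.
Definition eps : wn := None.

Definition wadd (a b : wn) : wn :=
  match a, b with
  | Some x, Some y => Some (x + y)%N
  | None, None => None
  | Some 0, None | None, Some 0 => None
  | Some x, None => Some x
  | None, Some y => Some y
  end.

(* An exponent vector (f(x_1), f(x_2), ...) is represented by a finite
   sequence; positions beyond its length carry exponent 0. *)
Definition mono := seq wn.

(* Candidate summands of e : every a with a + b = e for some b is in here. *)
Definition wcands (e : wn) : seq wn :=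
  None :: [seq Some i | i <- iota 0 (odflt 0%N e).+1].

Definition wdecomp (e : wn) : seq (wn * wn) :=
  [seq p <- [seq (a, b) | a <- wcands e, b <- wcands e] | wadd p.1 p.2 == e].

Fixpoint mdecomp (m : mono) : seq (mono * mono) :=
  if m is e :: m' then
    [seq (p.1 :: q.1, p.2 :: q.2) | p <- wdecomp e, q <- mdecomp m']
  else [:: ([::], [::])].

(* Elements of k[[X]]_Ñ: coefficient functions on monomials. *)
Definition series (R : comUnitRingType) := mono -> R.

Definition smul (R : comUnitRingType) (F G : series R) : series R :=
  fun m => \sum_(p <- mdecomp m) F p.1 * G p.2.

Definition is_comp (g : seq wn) : bool := all (fun e => e != Some 0%N) g.

Definition Mq (R : comUnitRingType) (g : seq wn) : series R :=
  fun m => if [seq e <- m | e != Some 0%N] == g then 1 else 0.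

Definition in_Ceps (g : seq wn) : bool := if g is None :: _ then true else false.

Definition leps (a : seq wn) : nat := count (fun e => e == None) a.
Definition bar (a : seq wn) : seq wn := [seq e <- a | e != None].

Definition in_WCQSym (R : comUnitRingType) (F : series R) : Prop :=
  exists (n : nat) (c : 'I_n -> R) (g : 'I_n -> seq wn),
    (forall i, is_comp (g i)) /\
    forall m, F m = \sum_(i < n) c i * Mq R (g i) m.

Definition in_I (R : comUnitRingType) (F : series R) : Prop :=
  exists (n : nat) (a : 'I_n -> series R) (g : 'I_n -> seq wn),
    (forall i, in_WCQSym (a i) /\ is_comp (g i) /\ in_Ceps (g i)) /\
    forall m, F m = \sum_(i < n) smul (a i) (Mq R (g i)) m.

(* Main.v *)
Require Import Defs.
From mathcomp Require Import all_boot all_order all_algebra.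
From mathcomp Require Import ring.
Set Implicit Arguments. Unset Strict Implicit. Unset Printing Implicit Defensive.
Import GRing.Theory.
Local Open Scope ring_scope.


Section Infra.
Variable R : comUnitRingType.

Lemma in_I_ext (F G : series R) : (forall m, F m = G m) -> in_I F -> in_I G.
Proof. move=> FG [n [a [g [H1 H2]]]]; exists n, a, g; split => // m; by rewrite -FG. Qed.

Lemma in_I0 : in_I (fun _ => (0 : R)).
Proof. exists 0%N, (fun _ => fun _ => 0), (fun _ => [::]); split; first by case.
by move=> m; rewrite big_ord0. Qed.

Lemma in_I_add (F G : series R) : in_I F -> in_I G -> in_I (fun m => F m + G m).
Proof.
move=> [n1 [a1 [g1 [H1 E1]]]] [n2 [a2 [g2 [H2 E2]]]].
exists (n1 + n2)%N, (fun i => match split i with inl j => a1 j | inr j => a2 j end),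
  (fun i => match split i with inl j => g1 j | inr j => g2 j end); split.
  by move=> i; case: (split i).
move=> m; rewrite big_split_ord E1 E2; congr (_ + _); apply: eq_bigr => i _.
  by rewrite -[lshift _ _]/(unsplit (inl i)) unsplitK.
by rewrite -[rshift _ _]/(unsplit (inr i)) unsplitK.
Qed.

Lemma in_W_scale (c : R) (F : series R) : in_WCQSym F -> in_WCQSym (fun m => c * F m).
Proof. move=> [n [a [g [H1 H2]]]]; exists n, (fun i => c * a i), g; split => // m.
by rewrite H2 mulr_sumr; apply: eq_bigr => i _; rewrite mulrA. Qed.

Lemma in_I_scale (c : R) (F : series R) : in_I F -> in_I (fun m => c * F m).
Proof.
move=> [n [a [g [H1 E1]]]]; exists n, (fun i => fun m => c * a i m), g; split.
  by move=> i; case: (H1 i) => h1 h2; split => //; apply: in_W_scale.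
move=> m; rewrite E1 mulr_sumr; apply: eq_bigr => i _.
by rewrite /smul mulr_sumr; apply: eq_bigr => p _; rewrite mulrA.
Qed.

Lemma in_I_sub (F G : series R) : in_I F -> in_I G -> in_I (fun m => F m - G m).
Proof. move=> hF hG; apply: in_I_ext (in_I_add hF (in_I_scale (-1) hG)) => m.
by rewrite mulN1r. Qed.

Lemma in_I_gen (A : series R) g : in_WCQSym A -> is_comp g -> in_Ceps g ->
  in_I (smul A (Mq R g)).
Proof. move=> hA hg he; exists 1%N, (fun _ => A), (fun _ => g); split => //.
by move=> m; rewrite big_ord1. Qed.

Lemma in_W_Mq u : is_comp u -> in_WCQSym (Mq R u).
Proof. move=> hu; exists 1%N, (fun _ => 1), (fun _ => u); split => //.
by move=> m; rewrite big_ord1 mul1r. Qed.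

End Infra.


Definition nz (m : seq wn) : seq wn := [seq e <- m | e != Some 0%N].

Fixpoint qsh (u v : seq wn) {struct u} : seq (seq wn) :=
  match u with
  | [::] => [:: v]
  | x :: u' => (fix qv (v : seq wn) : seq (seq wn) :=
      match v with
      | [::] => [:: u]
      | y :: v' => map (cons x) (qsh u' v) ++ map (cons y) (qv v')
                   ++ map (cons (wadd x y)) (qsh u' v')
      end) v
  end.

Lemma qsh_nil v : qsh [::] v = [:: v]. Proof. by []. Qed.
Lemma qsh_nilr u : qsh u [::] = [:: u]. Proof. by case: u. Qed.
Lemma qsh_cons x u y v : qsh (x :: u) (y :: v) =
  map (cons x) (qsh u (y :: v)) ++ map (cons y) (qsh (x :: u) v)
  ++ map (cons (wadd x y)) (qsh u v).
Proof. by []. Qed.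

Lemma mem_wdecomp e q : (q \in wdecomp e) = (wadd q.1 q.2 == e).
Proof.
rewrite /wdecomp mem_filter; case E: (wadd q.1 q.2 == e); last by [].
rewrite andTb.
move/eqP: E; case: q => a b E; rewrite /= in E.
have Hc : forall a b, wadd a b = e -> a \in wcands e.
  move=> {a b E} a b E; rewrite /wcands inE; case: a E => [i|] E; last by [].
  rewrite mem_map; last by move=> ? ? [].
  rewrite mem_iota add0n ltnS; case: b E => [j|] <- /=.
    by case: i => [|i] //=; case: j => [|j] //=; rewrite ?leq_addr.
  by case: i.
apply: (@allpairs_f _ _ _ (fun x y => (x, y))); first exact: (Hc a b).
apply: (Hc b a); rewrite -E; case: a b {E} => [[|i]|] [[|j]|] //=; by rewrite addnC.
Qed.

Lemma uniq_wcands e : uniq (wcands e).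
Proof.
rewrite /wcands cons_uniq (map_inj_uniq Some_inj) iota_uniq andbT.
by apply/negP; case/mapP.
Qed.

Lemma uniq_wdecomp e : uniq (wdecomp e).
Proof.
apply: filter_uniq; apply: allpairs_uniq; try exact: uniq_wcands.
by move=> [? ?] [? ?].
Qed.

Arguments qsh : simpl never.


Section ProdA.
Variable R : comUnitRingType.

Lemma smul_ext (F F' G G' : series R) m : F =1 F' -> G =1 G' -> smul F G m = smul F' G' m.
Proof. by move=> hF hG; apply: eq_bigr => p _; rewrite hF hG. Qed.

Lemma smul_nil (F G : series R) : smul F G [::] = F [::] * G [::].
Proof. by rewrite /smul /= big_seq1. Qed.

Lemma smul_cons (F G : series R) e m : smul F G (e :: m) =
  \sum_(p <- wdecomp e) smul (fun x => F (p.1 :: x)) (fun x => G (p.2 :: x)) m.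
Proof. by rewrite /smul /= big_allpairs_dep. Qed.

Definition shiftc (u : seq wn) (a : wn) : option (seq wn) :=
  if a == Some 0%N then Some u else
  if u is y :: u' then (if y == a then Some u' else None) else None.

Definition oMq (o : option (seq wn)) : series R :=
  fun x => if o is Some u then Mq R u x else 0.

Lemma Mq_cons u a x : Mq R u (a :: x) = oMq (shiftc u a) x.
Proof.
rewrite /oMq /shiftc /Mq /=; case: (eqVneq a (Some 0%N)) => [->|ne] //=.
case: u => [|y u'] //=; rewrite eqseq_cons eq_sym.
by case: (y == a).
Qed.

Lemma smul_oMq o1 o2 m : smul (oMq o1) (oMq o2) m =
  match o1, o2 with Some u, Some v => smul (Mq R u) (Mq R v) m | _, _ => 0 end.
Proof.
case: o1 => [u|]; case: o2 => [v|] //; rewrite /smul big1 // => p _ /=;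
  by rewrite ?mulr0 ?mul0r.
Qed.

Lemma sum_pred1 (s : seq (wn * wn)) q :
  \sum_(p <- s) ((p == q)%:R : R) = (count_mem q s)%:R.
Proof. elim: s => [|x s IH]; first by rewrite big_nil. 
by rewrite big_cons IH /= natrD eq_sym. Qed.

Lemma sum_wdecomp e q (k : R) :
  \sum_(p <- wdecomp e) (p == q)%:R * k = (wadd q.1 q.2 == e)%:R * k.
Proof.
by rewrite -mulr_suml sum_pred1 count_uniq_mem ?uniq_wdecomp // mem_wdecomp.
Qed.

Lemma sum_wdecomp2 e a b (k : R) :
  \sum_(p <- wdecomp e) (p == (a, b))%:R * k = (wadd a b == e)%:R * k.
Proof. exact: sum_wdecomp. Qed.

Lemma count_map_cons c e w (L : seq (seq wn)) :
  count_mem (e :: w) (map (cons c) L) = ((c == e) * count_mem w L)%N.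
Proof.
elim: L => [|z L IH] /=; first by rewrite muln0.
by rewrite IH eqseq_cons; case: (c == e) => /=; rewrite ?mul1n ?mul0n ?add0n.
Qed.

Lemma count_nil_map c (L : seq (seq wn)) : count_mem [::] (map (cons c) L) = 0%N.
Proof. by elim: L. Qed.

Lemma wadd0l y : wadd (Some 0%N) y = y. Proof. by case: y => [[|]|]. Qed.
Lemma wadd0r y : wadd y (Some 0%N) = y. Proof. by case: y => [[|] |] //= n; rewrite addn0. Qed.
Lemma wadd_eq0 x y : x != Some 0%N -> y != Some 0%N -> wadd x y != Some 0%N.
Proof. by case: x => [[|x]|]; case: y => [[|y]|]. Qed.
Lemma waddE x : x != Some 0%N -> wadd x None = x.
Proof. by case: x => [[|x]|]. Qed.

Arguments wadd : simpl never.
Definition C (m : seq wn) (u v : seq wn) : R := (count_mem (nz m) (qsh u v))%:R.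

Lemma prodA m : forall u v, is_comp u -> is_comp v ->
  smul (Mq R u) (Mq R v) m = C m u v.
Proof.
elim: m => [|e m IH] u v hu hv.
  rewrite smul_nil /C /Mq.
  case: u hu => [|x u] hu; case: v hv => [|y v] hv;
    rewrite ?qsh_cons ?qsh_nil ?qsh_nilr ?count_cat ?count_nil_map /= ?mul1r ?mul0r ?mulr0 //.
rewrite smul_cons.
have H1 : forall p, smul (fun x => Mq R u (p.1 :: x)) (fun x => Mq R v (p.2 :: x)) m =
   (p == (Some 0%N, Some 0%N))%:R * C m u v
   + (if v is y :: v' then (p == (Some 0%N, y))%:R * C m u v' else 0)
   + (if u is x :: u' then (p == (x, Some 0%N))%:R * C m u' v else 0)
   + (if u is x :: u' then if v is y :: v' then (p == (x, y))%:R * C m u' v' else 0 else 0).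
  move=> [a b] /=.
  rewrite (smul_ext _ (fun x => Mq_cons u a x) (fun x => Mq_cons v b x)) smul_oMq.
  rewrite /shiftc.
  have sy : forall (c d : wn), c != d -> (c == d) = false /\ (d == c) = false.
    by move=> c d /negbTE h; split => //; rewrite eq_sym.
  case: u hu => [|x u'] hu; case: v hv => [|y v'] hv;
  (try (move: hu => /= /andP[hx hu]; case: (sy _ _ hx) => hx1 hx2));
  (try (move: hv => /= /andP[hy hv]; case: (sy _ _ hy) => hy1 hy2));
  (case: (eqVneq a (Some 0%N)) => [->|na]; [|case: (sy _ _ na) => na1 na2]);
  (case: (eqVneq b (Some 0%N)) => [->|nb]; [|case: (sy _ _ nb) => nb1 nb2]);
  (try (case: (eqVneq x a) => [<-|nxa]; [|case: (sy _ _ nxa) => nxa1 nxa2]));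
  (try (case: (eqVneq y b) => [<-|nyb]; [|case: (sy _ _ nyb) => nyb1 nyb2]));
  rewrite ?IH //= ?xpair_eqE ?eqxx //=;
  rewrite ?hx1 ?hx2 ?hy1 ?hy2 ?na1 ?na2 ?nb1 ?nb2 ?nxa1 ?nxa2 ?nyb1 ?nyb2 /=;
  rewrite ?mul1r ?mul0r ?addr0 ?add0r //.
rewrite (eq_bigr _ (fun p _ => H1 p)) {H1}.
have Z : forall s : seq (wn * wn), \sum_(p <- s) (0 : R) = 0.
  by move=> s; rewrite big1_eq.
case: (eqVneq e (Some 0%N)) => [->|ne].
  have nzE : nz (Some 0%N :: m) = nz m by [].
  case: u hu => [|x u'] hu; case: v hv => [|y v'] hv;
  rewrite !big_split ?Z !sum_wdecomp2 /= ?addr0 ?wadd0l ?wadd0r /C nzE ?eqxx ?mul1r;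
  (try (move: hu => /= /andP[hx hu])); (try (move: hv => /= /andP[hy hv])).
  - by [].
  - by rewrite (negbTE hy) mul0r addr0.
  - by rewrite (negbTE hx) mul0r addr0.
  - by rewrite (negbTE hx) (negbTE hy) (negbTE (wadd_eq0 hx hy)) !mul0r !addr0.
have nzE : nz (e :: m) = e :: nz m by rewrite /nz /= ne.
have ne' : (Some 0%N == e) = false by rewrite eq_sym (negbTE ne).
case: u hu => [|x u'] hu; case: v hv => [|y v'] hv;
  rewrite !big_split ?Z !sum_wdecomp2 /= ?addr0 ?wadd0l ?wadd0r /C nzE ne' mul0r ?add0r.
- by rewrite !qsh_nil.
- rewrite !qsh_nil /= eqseq_cons.
  by case: (y == e) => /=; rewrite ?mul1r ?mul0r.
- rewrite !qsh_nilr /= eqseq_cons.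
  by case: (x == e) => /=; rewrite ?mul1r ?mul0r.
- rewrite qsh_cons !count_cat !count_map_cons !natrD !natrM.
  by rewrite addrA (addrC (_ * _)%R (_ * _)%R).
Qed.
End ProdA.


Section Comb.
Variable R : comUnitRingType.

Definition Ms (L : seq (seq wn)) : series R := fun m => \sum_(w <- L) Mq R w m.
Definition good L := in_I (Ms L).

Lemma good_ext A B : (forall m, Ms A m = Ms B m) -> good A -> good B.
Proof. by move=> h; apply: in_I_ext. Qed.

Lemma good_nil : good [::].
Proof. by apply: in_I_ext (@in_I0 R) => m; rewrite /Ms big_nil. Qed.

Lemma good_cat A B : good A -> good B -> good (A ++ B).
Proof. move=> hA hB; apply: in_I_ext (in_I_add hA hB) => m; by rewrite /Ms big_cat. Qed.

Lemma good_catl A B : good (A ++ B) -> good B -> good A.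
Proof. move=> hA hB; apply: in_I_ext (in_I_sub hA hB) => m.
by rewrite /Ms big_cat /= addrK. Qed.

Lemma Ms_count L m : Ms L m = (count_mem (nz m) L)%:R.
Proof.
elim: L => [|w L IH]; first by rewrite /Ms big_nil.
rewrite /Ms big_cons -/(Ms L m) IH /= natrD /Mq -/(nz m) eq_sym.
by case: (w == nz m).
Qed.

Lemma good_gen u d : is_comp u -> is_comp d -> good (qsh u (None :: d)).
Proof.
move=> hu hd; have hd' : is_comp (None :: d) by [].
apply: in_I_ext (in_I_gen (@in_W_Mq R u hu) hd' erefl) => m.
by rewrite prodA // Ms_count.
Qed.

Lemma good_ceps L : all (fun w => is_comp w && in_Ceps w) L -> good L.
Proof.
elim: L => [|w L IH]; first by move=> _; exact: good_nil.
move=> /= /andP[/andP[hw he] hL]; apply: (@good_cat [:: w] L) (IH hL).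
apply: in_I_ext (in_I_gen (@in_W_Mq R [::] erefl) hw he) => m.
by rewrite prodA // Ms_count /C qsh_nil.
Qed.

End Comb.

Lemma qsh_comp u v : is_comp u -> is_comp v -> all is_comp (qsh u v).
Proof.
elim: u v => [|x u IHu] v; first by rewrite qsh_nil /= => _ ->.
move=> hxu; elim: v => [|y v IHv] hyv; first by rewrite qsh_nilr; apply/allP => w; rewrite inE => /eqP ->.
move: (hxu) (hyv) => /= /andP[hx hu] /andP[hy hv].
rewrite qsh_cons !all_cat !all_map; apply/and3P; split.
- by apply/allP => w /(allP (IHu _ hu hyv)) /= ->; rewrite hx.
- by apply/allP => w /(allP (IHv hv)) /= ->; rewrite hy.
- by apply/allP => w /(allP (IHu _ hu hv)) /= ->; rewrite wadd_eq0.
Qed.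


Definition hp (q : seq wn) : bool :=
  if q is b :: _ then (b != None) && (b != Some 0%N) else false.
Definition Dl (W : seq (seq wn)) := map (cons None) W ++ W.
Definition Phi (b d : seq wn) := qsh b (None :: d) ++ qsh b d.

Section Main.
Variable R : comUnitRingType.

Definition PR N := forall q d, (size q < N)%N -> hp q -> is_comp q -> is_comp d ->
  good R [:: q ++ None :: d; q ++ d].

Lemma goodD N q : PR N -> (size q < N)%N -> hp q -> is_comp q ->
  forall W, all is_comp W -> good R (map (cat q) (Dl W)).
Proof.
move=> hN hs hq cq; elim => [|w W IH]; first by move=> _; exact: good_nil.
move=> /= /andP[hw hW].
apply: (good_ext (A := [:: q ++ None :: w; q ++ w] ++ map (cat q) (Dl W))).
  move=> m; rewrite !Ms_count; congr (_%:R).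
  rewrite /Dl /= !map_cat !count_cat /=; ring.
exact: good_cat (hN _ _ hs hq cq hw) (IH hW).
Qed.

Lemma map_cat_cons q c (X : seq (seq wn)) :
  map (cat q) (map (cons c) X) = map (cat (rcons q c)) X.
Proof. by rewrite -map_comp; apply: eq_map => w /=; rewrite cat_rcons. Qed.

Lemma unroll N : PR N -> forall b q d, is_comp b -> is_comp q -> hp q -> is_comp d ->
  (size q + size b <= N)%N -> good R (map (cat q) (Phi b d)) ->
  good R [:: (q ++ b) ++ None :: d; (q ++ b) ++ d].
Proof.
move=> hN; elim => [|c b IH] q d cb cq hq cd hs.
  by rewrite /Phi !qsh_nil cats0.
move=> hg; move: (cb) => /= /andP[hc cb'].
have E : forall m, Ms R (map (cat q) (Phi (c :: b) d)) m =
   Ms R (map (cat (rcons q c)) (Phi b d) ++ map (cat q) (Dl (qsh (c :: b) d))) m.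
  move=> m; rewrite !Ms_count; congr (_%:R).
  rewrite /Phi /Dl qsh_cons (waddE hc) !map_cat !map_cat_cons !count_cat; ring.
have hs' : (size q < N)%N by apply: leq_trans hs; rewrite /= addnS ltnS leq_addr.
have g1 := good_catl (good_ext E hg) (goodD hN hs' hq cq (qsh_comp cb cd)).
have hq' : hp (rcons q c) by case: q hq {cq hs hg E g1 IH hs'}.
have cq' : is_comp (rcons q c) by rewrite /is_comp all_rcons hc.
have hs2 : (size (rcons q c) + size b <= N)%N by rewrite size_rcons addSnnS.
by move: (IH _ _ cb' cq' hq' cd hs2 g1); rewrite !cat_rcons.
Qed.

Lemma PR_all N : PR N.
Proof.
elim: N => [|N IH] q d //.
move=> hs hq cq cd; case: q hs hq cq => [|b b'] // hs hq cq.
have hb : b != Some 0%N by case/andP: hq.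
have g := good_gen R cq cd.
have E : forall m, Ms R (qsh (b :: b') (None :: d)) m =
   Ms R (map (cat [:: b]) (Phi b' d) ++ map (cons None) (qsh (b :: b') d)) m.
  move=> m; rewrite !Ms_count; congr (_%:R).
  rewrite /Phi qsh_cons (waddE hb) !map_cat !count_cat.
  have -> : forall X : seq (seq wn), map (cat [:: b]) X = map (cons b) X by [].
  ring.
have hc : all (fun w => is_comp w && in_Ceps w) (map (cons None) (qsh (b :: b') d)).
  by rewrite all_map; apply/allP => w /(allP (qsh_comp cq cd)) /= ->.
have g1 := good_catl (good_ext E g) (good_ceps R hc).
have := unroll IH (b := b') (q := [:: b]) (d := d).
move: (cq) => /andP[_ cb'].
move=> h; apply: h => //; first by rewrite /is_comp /= hb.
Qed.
End Main.


Lemma bar_id a : leps a = 0%N -> bar a = a.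
Proof. elim: a => // e a IH; case: e => [n|] //= h; by rewrite IH. Qed.

Lemma mem_None a : (0 < leps a)%N -> None \in a.
Proof. elim: a => // e a IH; case: e => [n|] /= h; rewrite inE //; exact: IH. Qed.

Lemma split_None a : None \in a -> exists (b d : seq wn), a = b ++ None :: d.
Proof.
move=> h; exists (take (index None a) a), (drop (index None a).+1 a).
by rewrite -{1}(cat_take_drop (index None a) a) (drop_nth None) ?index_mem // nth_index.
Qed.

Lemma final (R : comUnitRingType) n : forall alpha, leps alpha = n -> is_comp alpha ->
  ~~ in_Ceps alpha ->
  in_I (fun m => Mq R alpha m + (-1) ^+ (leps alpha).+1 * Mq R (bar alpha) m).
Proof.
elim: n => [|n IH] alpha hl hc hN.
  apply: in_I_ext (@in_I0 R) => m.
  by rewrite bar_id // hl expr1 mulN1r addrN.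
have [b [d E]] : exists (b d : seq wn), alpha = b ++ None :: d.
  by apply: split_None; apply: mem_None; rewrite hl.
subst alpha.
case: b hc hN hl => [|c b] // hc hN hl.
have hc2 := hc; rewrite /is_comp all_cat /= in hc2; case/andP: hc2 => /andP[hc0 hb] hd.
have hp' : hp (c :: b) by rewrite /= hc0 andbT; move: hN.
have cq : is_comp (c :: b) by rewrite /is_comp /= hc0.
have G := @PR_all R (size (c :: b)).+1 (c :: b) d (ltnSn _) hp' cq hd.
have hl' : leps ((c :: b) ++ d) = n.
  by move: hl; rewrite /leps !count_cat /= add1n addnS => -[].
have hc' : is_comp ((c :: b) ++ d) by rewrite /is_comp all_cat /= hc0 hb.
have hN' : ~~ in_Ceps ((c :: b) ++ d) by [].
have J := IH _ hl' hc' hN'.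
have hbar : bar ((c :: b) ++ d) = bar ((c :: b) ++ None :: d)
  by rewrite /bar !filter_cat.
apply: in_I_ext (in_I_sub G J) => m.
rewrite /Ms !big_cons big_nil hbar hl hl' !exprS.
ring.
Qed.

Unset Implicit Arguments.

Theorem lemma3p11 (R : comUnitRingType)
  (hQ : forall n : nat, (n.+1)%:R \is a @GRing.unit R)
  (alpha : seq wn) (halpha : is_comp alpha) (hN : ~~ in_Ceps alpha) :
  in_I (fun m => Mq R alpha m + (-1) ^+ (leps alpha).+1 * Mq R (bar alpha) m).
Proof. exact: (final R (erefl (leps alpha)) halpha hN). Qed.
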